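(* Let $\langle-,-\rangle$ be a cyclic form on $C$. Then $\langle\mu(v_1,\dots,v_n),\mu(w_1,\dots,w_l)\rangle=0$ unless $\mathrm{Span}\{v_1,\dots,v_n,w_1,\dots,w_l\}=V$.
   Context: $k$ is a field of characteristic zero, $V$ a $k$-vector space of dimension $m\ge1$ in degree $0$, $A=\mathrm{Sym}(V)$, and $C=A^{\textup{!`}}$ the exterior coalgebra on $sV$ with elements $\mu(v_1,\dots,v_n)=sv_1\wedge\cdots\wedge sv_n$ (the vectors in each such expression taken linearly independent; $\mu()=e$ is the counit element), and coproduct $\triangle\mu(v_1,\dots,v_n)=\sum_{p=0}^n\sum_{\sigma\in Sh_{p,n-p}}\mathrm{sgn}(\sigma)\mu(v_{\sigma(1)},\dots,v_{\sigma(p)})\otimes\mu(v_{\sigma(p+1)},\dots,v_{\sigma(n)})$. A symmetric bilinear form of degree $-d$ on $C$ is $\langle-,-\rangle:C\otimes C\to k[d]$ with $\langle a,b\rangle=(-1)^{|a||b|}\langle b,a\rangle$; it is cyclic if $\sum\langle a,b^2\rangle b^1=\sum\langle a^1,b\rangle a^2$ for all $a,b$, with $\triangle(a)=\sum a^1\otimes a^2$, $\triangle(b)=\sum b^1\otimes b^2$. *)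

(* Defs.v *)
From mathcomp Require Import all_boot all_order all_algebra.
Set Implicit Arguments. Unset Strict Implicit. Unset Printing Implicit Defensive.
Import GRing.Theory.
Local Open Scope ring_scope.

(* V = k^m with its standard basis e_0,...,e_{m-1}.  The exterior coalgebra
   C = Lambda(sV) is encoded by its coordinates in the basis
   e_S = s e_{s_1} /\ ... /\ s e_{s_p}  (S = {s_1 < ... < s_p} a subset of 'I_m);
   C (x) C is encoded by coordinates in the basis e_S (x) e_T. *)
Section ExtCoalg.
Variables (k : fieldType) (m : nat).

Notation ext := {ffun {set 'I_m} -> k}.
Notation ext2 := {ffun {set 'I_m} * {set 'I_m} -> k}.

Definition ebasis (S : {set 'I_m}) : ext := [ffun T => (T == S)%:R].

Definition homog (p : nat) (a : ext) : Prop := forall S : {set 'I_m}, #|S| != p -> a S = 0.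

Definition shuffle_sign (T U : {set 'I_m}) : k :=
  (-1) ^+ #|[set pr : 'I_m * 'I_m | (pr.1 \in T) && (pr.2 \in U) && (pr.2 < pr.1)%N]|.

(* coproduct: Delta e_S = sum_{T subset S} sgn(T, S\T) e_T (x) e_{S\T}, extended linearly *)
Definition coproduct (a : ext) : ext2 :=
  [ffun pr : {set 'I_m} * {set 'I_m} => if [disjoint pr.1 & pr.2]
              then shuffle_sign pr.1 pr.2 * a (pr.1 :|: pr.2) else 0].

(* mu(v_1,...,v_n) = s v_1 /\ ... /\ s v_n, the v_i being the rows of Vs,
   expanded multilinearly: sum over f of (prod_i v_i(f i)) e_{f 0} /\ ... /\ e_{f(n-1)},
   where e_{f 0} /\ ... /\ e_{f (n-1)} = 0 if f is not injective and
   (-1)^(inversions of f) e_{image f} otherwise. *)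
Definition inversions n (f : {ffun 'I_n -> 'I_m}) : nat :=
  #|[set pr : 'I_n * 'I_n | (pr.1 < pr.2)%N && (f pr.2 < f pr.1)%N]|.

Definition mu n (Vs : 'M[k]_(n, m)) : ext :=
  [ffun S => \sum_(f : {ffun 'I_n -> 'I_m} | injectiveb f && (f @: setT == S))
               (-1) ^+ inversions f * \prod_(i < n) Vs i (f i)].

Definition pairing (B : {set 'I_m} -> {set 'I_m} -> k) (a b : ext) : k :=
  \sum_(S : {set 'I_m}) \sum_(T : {set 'I_m}) a S * b T * B S T.

(* symmetric bilinear form of degree -d which is cyclic:
   sum <a, b^2> b^1 = sum <a^1, b> a^2  (coordinate X of both sides) *)
Definition is_cyclic_form (d : int) (B : {set 'I_m} -> {set 'I_m} -> k) : Prop :=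
  [/\ (forall (p q : nat) (a b : ext), homog p a -> homog q b ->
         pairing B a b = (-1) ^+ (p * q) * pairing B b a),
      (forall (p q : nat) (a b : ext), homog p a -> homog q b ->
         ((p + q)%N)%:Z != d -> pairing B a b = 0)
    & (forall (a b : ext) (X : {set 'I_m}),
         \sum_(U : {set 'I_m}) coproduct b (X, U) * pairing B a (ebasis U)
         = \sum_(T : {set 'I_m}) coproduct a (T, X) * pairing B (ebasis T) b)].

End ExtCoalg.

(* Main.v *)
Require Import Defs.
From mathcomp Require Import all_boot all_order all_algebra ring.
Import GRing.Theory.
Local Open Scope ring_scope.
Set Implicit Arguments. Unset Strict Implicit. Unset Printing Implicit Defensive.
Lemma card_sum (T : finType) (P : pred T) : #|[set x : T | P x]| = (\sum_x (P x : nat))%N.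
Proof. by rewrite -sum1dep_card big_mkcond; apply: eq_bigr => x _; case: (P x). Qed.

Lemma card_pairsT (T : finType) (P : T -> T -> bool) :
  #|[set pr : T * T | P pr.1 pr.2]| = (\sum_a \sum_b (P a b : nat))%N.
Proof.
rewrite card_sum -(pair_bigA _ (fun a b => (P a b : nat))) //.
Qed.

Section Aux.
Variables (k : fieldType) (m : nat).
Notation ext := {ffun {set 'I_m} -> k}.

Definition cnt (S : {set 'I_m}) (i : 'I_m) : nat := \sum_(s in S) (s < i)%N.

Lemma card_pairs (P : 'I_m -> 'I_m -> bool) :
  #|[set pr : 'I_m * 'I_m | P pr.1 pr.2]| = (\sum_a \sum_b (P a b : nat))%N.
Proof.
rewrite -sum1dep_card big_mkcond /=.
rewrite -(pair_bigA _ (fun a b => if P a b then 1 else 0)%N).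
by apply: eq_bigr => a _; apply: eq_bigr => b _; case: (P a b).
Qed.

Lemma sign_sq (x c : nat) : (-1) ^+ (x + c) * (-1) ^+ c = (-1) ^+ x :> k.
Proof.
by rewrite exprD -mulrA -exprD addnn -mul2n exprM expr2 mulrNN mulr1 expr1n mulr1.
Qed.

Lemma coprod_l (b : ext) i U :
  coproduct b ([set i], U) = if i \in U then 0 else (-1) ^+ cnt U i * b (i |: U).
Proof.
rewrite ffunE /= disjoints1; case: (i \in U) => //=; congr (_ * _).
rewrite /shuffle_sign; congr (_ ^+ _).
rewrite (card_pairs (fun a b => (a \in [set i]) && (b \in U) && (b < a)%N)).
rewrite (bigD1 i) //= [X in (_ + X)%N]big1 ?addn0 => [|a ha]; last first.
  by apply: big1 => b0 _; rewrite in_set1 (negbTE ha).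
rewrite /cnt [RHS]big_mkcond /=; apply: eq_bigr => s _.
by rewrite in_set1 eqxx /=; case: (s \in U).
Qed.

Lemma coprod_r (a : ext) i T :
  coproduct a (T, [set i]) = if i \in T then 0 else (-1) ^+ #|T| * ((-1) ^+ cnt T i * a (i |: T)).
Proof.
rewrite ffunE /= disjoint_sym disjoints1; case: (boolP (i \in T)) => //= hiT.
rewrite setUC mulrA; congr (_ * _); rewrite /shuffle_sign.
have -> : #|[set pr : 'I_m * 'I_m | (pr.1 \in T) && (pr.2 \in [set i]) && (pr.2 < pr.1)%N]|
   = (\sum_(t in T) (i < t)%N)%N.
  rewrite (card_pairs (fun a b => (a \in T) && (b \in [set i]) && (b < a)%N)) [RHS]big_mkcond /=; apply: eq_bigr => t _.
  rewrite (bigD1 i) //= big1 ?addn0 => [|b0 hb]; last by rewrite in_set1 (negbTE hb) andbF.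
  by rewrite in_set1 eqxx andbT; case: (t \in T).
have hT : ((\sum_(t in T) (i < t)%N) + cnt T i)%N = #|T|.
  rewrite /cnt -big_split /= -sum1_card; apply: eq_bigr => t ht.
  have : t != i by apply: contraNneq hiT => <-.
  move=> hne; case: ltngtP => // /val_inj hti; by rewrite hti eqxx in hne.
by rewrite -hT sign_sq.
Qed.
Definition lcon (phi : 'I_m -> k) (x : ext) : ext :=
  [ffun U : {set 'I_m} => \sum_(i | i \notin U) phi i * (-1) ^+ cnt U i * x (i |: U)].
Definition wedge (e : 'I_m -> k) (x : ext) : ext :=
  [ffun S : {set 'I_m} => \sum_(i in S) e i * (-1) ^+ cnt S i * x (S :\ i)].



Lemma pairing_eb_r B (a : ext) U : pairing B a (ebasis k U) = \sum_S a S * B S U.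
Proof.
rewrite /pairing; apply: eq_bigr => S _.
rewrite (bigD1 U) //= big1 => [|T hT]; first by rewrite !ffunE eqxx addr0 mulr1.
by rewrite !ffunE (negbTE hT) mulr0 mul0r.
Qed.

Lemma pairing_eb_l B (b : ext) T : pairing B (ebasis k T) b = \sum_U b U * B T U.
Proof.
rewrite /pairing (bigD1 T) //= [X in _ + X]big1 => [|S hS]; last first.
  by rewrite big1 // => U _; rewrite !ffunE (negbTE hS) !mul0r.
rewrite addr0; apply: eq_bigr => U _; by rewrite !ffunE eqxx mul1r.
Qed.

Lemma pairing_r B (a c : ext) : pairing B a c = \sum_U c U * pairing B a (ebasis k U).
Proof.
transitivity (\sum_U \sum_S a S * c U * B S U); first by rewrite /pairing exchange_big.
apply: eq_bigr => U _; rewrite pairing_eb_r mulr_sumr; apply: eq_bigr => S _; ring.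
Qed.

Lemma pairing_l B (c b : ext) : pairing B c b = \sum_T c T * pairing B (ebasis k T) b.
Proof.
transitivity (\sum_T \sum_U c T * b U * B T U); first by [].
apply: eq_bigr => T _; rewrite pairing_eb_l mulr_sumr; apply: eq_bigr => U _; ring.
Qed.

Definition muf n (v : 'I_n -> 'I_m -> k) : ext :=
  [ffun S : {set 'I_m} => \sum_(f : {ffun 'I_n -> 'I_m} | injectiveb f && (f @: setT == S))
               (-1) ^+ inversions f * \prod_(i < n) v i (f i)].

Lemma muf0_nz (v : 'I_0 -> 'I_m -> k) S : S != set0 -> muf v S = 0.
Proof.
move=> hS; rewrite ffunE big1 // => f /andP[_ /eqP hf].
have : f @: setT = set0.
  by apply/setP => x; rewrite inE; apply/imsetP => -[[j hj]].
by rewrite hf => h; rewrite h eqxx in hS.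
Qed.

Definition hcons n (p : 'I_m * {ffun 'I_n -> 'I_m}) : {ffun 'I_n.+1 -> 'I_m} :=
  [ffun j => if unlift ord0 j is Some j' then p.2 j' else p.1].

Lemma hcons0 n p : @hcons n p ord0 = p.1.
Proof. by rewrite ffunE unlift_none. Qed.

Lemma hconsS n p j : @hcons n p (lift ord0 j) = p.2 j.
Proof. by rewrite ffunE liftK. Qed.

Lemma hcons_bij n : bijective (@hcons n).
Proof.
exists (fun f : {ffun 'I_n.+1 -> 'I_m} => (f ord0, [ffun j : 'I_n => f (lift ord0 j)])).
  by case=> i g /=; rewrite hcons0; congr (_, _); apply/ffunP => j; rewrite ffunE hconsS.
move=> f; apply/ffunP => j; rewrite ffunE /=.
by case: unliftP => [j' ->|->]; rewrite ?ffunE.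
Qed.

Lemma im_hcons n p : @hcons n p @: setT = p.1 |: (p.2 @: setT).
Proof.
apply/setP => x; rewrite !inE; apply/imsetP/orP.
  case=> j _ ->; case: (unliftP ord0 j) => [j' ->|->]; rewrite ?hcons0 ?hconsS; last by left.
  by right; apply/imsetP; exists j'.
case=> [/eqP ->|/imsetP [j _ ->]]; first by exists ord0; rewrite ?hcons0.
by exists (lift ord0 j); rewrite ?hconsS.
Qed.

Lemma inj_card N (f : {ffun 'I_N -> 'I_m}) : injectiveb f = (#|f @: setT| == N).
Proof.
apply/injectiveP/idP => [hf|].
  by rewrite card_imset // cardsT card_ord.
move=> h x y.
have /imset_injP hf : #|f @: setT| == #|[set: 'I_N]| by rewrite cardsT card_ord.
by apply: hf; rewrite inE.
Qed.

Lemma inv_hcons n i g : inversions (@hcons n (i, g)) = (#|[set j | g j < i]| + inversions g)%N.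
Proof.
rewrite /inversions (card_pairsT (fun a b : 'I_n.+1 => (a < b)%N && (hcons (i, g) b < hcons (i, g) a)%N)).
rewrite (card_pairsT (fun a b : 'I_n => (a < b)%N && (g b < g a)%N)) card_sum.
rewrite big_ord_recl big_ord_recl /= add0n; congr (_ + _)%N.
  by apply: eq_bigr => b _; rewrite hconsS hcons0.
apply: eq_bigr => a _; rewrite big_ord_recl /=; apply: eq_bigr => b _.
by rewrite !hconsS /bump !leq0n !add1n ltnS.
Qed.

Lemma pred_hcons n i (g : {ffun 'I_n -> 'I_m}) S :
  (injectiveb (hcons (i, g)) && (hcons (i, g) @: setT == S))
  = [&& i \in S, injectiveb g & g @: setT == S :\ i].
Proof.
rewrite inj_card inj_card im_hcons /=.
have : (#|g @: setT| <= n)%N by rewrite (leq_trans (leq_imset_card _ _)) // cardsT card_ord.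
move: (g @: setT) => G hG.
case: (boolP (i \in G)) => hiG.
  rewrite cardsU1 hiG /= add0n (ltn_eqF (leq_ltn_trans hG (ltnSn n))) /=.
  case: (i \in S) => //=; apply/esym/negbTE; apply/negP => /andP[_ /eqP hGS].
  by rewrite hGS setD11 in hiG.
rewrite cardsU1 hiG add1n eqSS.
have -> : (i |: G == S) = (i \in S) && (G == S :\ i).
  apply/eqP/andP => [<-|[hiS /eqP ->]]; last by rewrite setD1K.
  by rewrite setU11 setU1K.
by case: (i \in S); case: (#|G| == n).
Qed.

Lemma cnt_g n i (g : {ffun 'I_n -> 'I_m}) (S : {set 'I_m}) : i \in S -> injectiveb g -> g @: setT = S :\ i ->
  cnt S i = #|[set j | (g j < i)%N]|.
Proof.
move=> hiS /injectiveP hg hG.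
rewrite /cnt (big_setD1 i hiS) ltnn /= -hG big_imset /=; last by move=> x y _ _; apply: hg.
by rewrite card_sum; apply: eq_bigl => j; rewrite inE.
Qed.

Lemma muf_rec n (v : 'I_n.+1 -> 'I_m -> k) S :
  muf v S = wedge (v ord0) (muf (fun i => v (lift ord0 i))) S.
Proof.
rewrite ffunE (reindex (@hcons n)); last by apply: onW_bij; apply: hcons_bij.
rewrite ffunE.
under [RHS]eq_bigr do rewrite ffunE mulr_sumr.
rewrite pair_big_dep /=.
apply: eq_big => [[i g]|[i g]] /=.
  exact: pred_hcons.
rewrite pred_hcons => /and3P[hiS hg /eqP hG].
rewrite inv_hcons big_ord_recl hcons0 (cnt_g hiS hg hG) exprD.
rewrite [X in _ * (_ * X) = _](eq_bigr (fun j => v (lift ord0 j) (g j))) => [|j _]; last by rewrite hconsS.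
ring.
Qed.

Lemma cnt_U1 (U : {set 'I_m}) i j : i \notin U -> cnt (i |: U) j = ((i < j) + cnt U j)%N.
Proof. by move=> hi; rewrite /cnt big_setU1. Qed.

Lemma cnt_D1 (U : {set 'I_m}) i j : j \in U -> cnt U i = ((j < i) + cnt (U :\ j) i)%N.
Proof. by move=> hj; rewrite /cnt (big_setD1 j). Qed.

Lemma sgsq (c : nat) : (-1) ^+ c * (-1) ^+ c = 1 :> k.
Proof. by rewrite -exprD addnn -mul2n exprM expr2 mulrNN mulr1 expr1n. Qed.

Lemma lcon_wedge phi e x U :
  lcon phi (wedge e x) U = (\sum_i phi i * e i) * x U - wedge e (lcon phi x) U.
Proof.
pose D1 := \sum_(i | i \notin U) \sum_(j in U)
   phi i * (-1) ^+ cnt U i * (e j * (-1) ^+ cnt (i |: U) j * x ((i |: U) :\ j)).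
pose D2 := \sum_(j in U) \sum_(i | i \notin U)
   e j * (-1) ^+ cnt U j * (phi i * (-1) ^+ cnt (U :\ j) i * x (i |: (U :\ j))).
have hL : lcon phi (wedge e x) U = \sum_(i | i \notin U) phi i * e i * x U + D1.
  rewrite /D1 -big_split /= ffunE; apply: eq_bigr => i hi.
  rewrite ffunE big_setU1 //= mulrDr -mulr_sumr; congr (_ + _).
  rewrite cnt_U1 // setU1K //= ltnn /=.
  transitivity (phi i * e i * x U * ((-1) ^+ cnt U i * (-1) ^+ cnt U i)); first ring.
  by rewrite sgsq mulr1.
have hR : wedge e (lcon phi x) U = \sum_(j in U) phi j * e j * x U + D2.
  rewrite /D2 -big_split /= ffunE; apply: eq_bigr => j hj.
  rewrite ffunE (bigD1 j) /=; last by rewrite !inE eqxx.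
  rewrite mulrDr; congr (_ + _).
    rewrite [in LHS](cnt_D1 j hj) ltnn /= setD1K //.
    transitivity (phi j * e j * x U * ((-1) ^+ cnt (U :\ j) j * (-1) ^+ cnt (U :\ j) j)); first ring.
    by rewrite sgsq mulr1.
  rewrite mulr_sumr; apply: eq_bigl => i; rewrite !inE.
  by case: (eqVneq i j) => [->|]; rewrite ?hj //= andbT.
have hE : D1 = - D2.
  rewrite /D2 exchange_big /= -sumrN; apply: eq_bigr => i hi; rewrite -sumrN; apply: eq_bigr => j hj.
  have hij : i != j by apply: contraNneq hi => ->.
  have -> : (i |: U) :\ j = i |: (U :\ j).
    apply/setP => t; rewrite !inE; case: (eqVneq t i) => [->|] //=; by rewrite hij.
  rewrite cnt_U1 // (cnt_D1 i hj) !exprD.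
  case: ltngtP => [h1|h1|h1]; last by move: hij; rewrite (val_inj h1) eqxx.
    by rewrite /= expr1 expr0; ring.
  by rewrite /= expr1 expr0; ring.
rewrite hL hR hE mulr_suml [X in _ = X - _](bigID (fun i => i \in U)) /=; ring.
Qed.

Lemma cyc_main d B phi (a b : ext) : is_cyclic_form d B ->
  (forall U, lcon phi a U = 0) -> pairing B a (lcon phi b) = 0.
Proof.
case=> _ _ H3 ha.
have hl : forall (x : ext) U, lcon phi x U = \sum_i phi i * coproduct x ([set i], U).
  move=> x U; rewrite ffunE [RHS](bigID (fun i => i \in U)) /= [X in _ = X + _]big1 ?add0r => [|i hi]; last by rewrite coprod_l hi mulr0.
  by apply: eq_bigr => i hi; rewrite coprod_l (negbTE hi) mulrA.
have hr : forall T, \sum_i phi i * coproduct a (T, [set i]) = (-1) ^+ #|T| * lcon phi a T.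
  move=> T; rewrite ffunE mulr_sumr [LHS](bigID (fun i => i \in T)) /= [X in X + _ = _]big1 ?add0r => [|i hi]; last by rewrite coprod_r hi mulr0.
  by apply: eq_bigr => i hi; rewrite coprod_r (negbTE hi); ring.
rewrite pairing_r.
transitivity (\sum_i phi i * \sum_U coproduct b ([set i], U) * pairing B a (ebasis k U)).
  under eq_bigr do rewrite hl mulr_suml.
  rewrite exchange_big; apply: eq_bigr => i _; rewrite mulr_sumr; apply: eq_bigr => U _.
  by rewrite mulrA.
under eq_bigr do rewrite H3.
transitivity (\sum_T (\sum_i phi i * coproduct a (T, [set i])) * pairing B (ebasis k T) b).
  under eq_bigr do rewrite mulr_sumr. rewrite exchange_big /=; apply: eq_bigr => T _; rewrite mulr_suml; apply: eq_bigr => i _.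
  by rewrite mulrA.
by apply: big1 => T _; rewrite hr ha mulr0 mul0r.
Qed.
Lemma lcon_muf0 phi n (v : 'I_n -> 'I_m -> k) :
  (forall i, \sum_j phi j * v i j = 0) -> forall U, lcon phi (muf v) U = 0.
Proof.
elim: n v => [|n IH] v hv U.
  rewrite ffunE big1 // => i iU; rewrite muf0_nz ?mulr0 //.
  by apply/set0Pn; exists i; rewrite setU11.
have -> : lcon phi (muf v) U = lcon phi (wedge (v ord0) (muf (fun i => v (lift ord0 i)))) U.
  by rewrite !ffunE; apply: eq_bigr => i _; rewrite muf_rec.
rewrite lcon_wedge hv mul0r ffunE big1 ?subr0 // => i _.
by rewrite IH ?mulr0 // => j; apply: hv.
Qed.

End Aux.

Theorem corollary9p3 (k : fieldType) (m : nat) (d : int)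
    (B : {set 'I_m} -> {set 'I_m} -> k)
    (n l : nat) (Vs : 'M[k]_(n, m)) (Ws : 'M[k]_(l, m)) :
  [pchar k] =i pred0 -> (0 < m)%N ->
  is_cyclic_form d B ->
  row_free Vs -> row_free Ws ->
  pairing B (mu Vs) (mu Ws) != 0 ->
  (1%:M <= col_mx Vs Ws)%MS.
Proof.
move=> _ _ hcyc _ _ hP; rewrite sub1mx; apply/negPn/negP => hnf.
have : kermx (col_mx Vs Ws)^T != 0 by rewrite kermx_eq0 /row_free mxrank_tr.
case/matrix0Pn => r [j0 hj0].
pose psi := row r (kermx (col_mx Vs Ws)^T).
have hpsi : psi *m (col_mx Vs Ws)^T = 0 by rewrite -row_mul mulmx_ker row0.
move: hpsi; rewrite tr_col_mx mul_mx_row => /eqP; rewrite row_mx_eq0 => /andP[/eqP hV /eqP hW].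
pose phi := fun j : 'I_m => (psi 0 j : k).
have hphi0 : phi j0 != 0 by rewrite /phi mxE.
have kerV : forall i, \sum_j phi j * Vs i j = 0.
  move=> i; have h := congr1 (fun M : 'M[k]_(1, n) => M 0 i) hV; rewrite !mxE in h; rewrite -[RHS]h.
  by apply: eq_bigr => j _; rewrite /phi !mxE.
have kerW : forall i, \sum_j phi j * Ws i j = 0.
  move=> i; have h := congr1 (fun M : 'M[k]_(1, l) => M 0 i) hW; rewrite !mxE in h; rewrite -[RHS]h.
  by apply: eq_bigr => j _; rewrite /phi !mxE.
pose e := fun j : 'I_m => ((j == j0)%:R : k).
pose v := fun (i : 'I_l.+1) j => if unlift ord0 i is Some i' then Ws i' j else e j.
have hmu : forall (Ms : 'M[k]_(n, m)), mu Ms = muf (fun i j => Ms i j) by [].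
have hb : forall U, lcon phi (muf v) U = phi j0 * mu Ws U.
  move=> U.
  have hw : forall S, muf v S = wedge e (mu Ws) S.
    move=> S; rewrite muf_rec !ffunE; apply: eq_bigr => s _; congr (_ * _).
      by rewrite /v unlift_none.
    rewrite !ffunE; apply: eq_bigr => f _; congr (_ * _).
    by apply: eq_bigr => t _; rewrite /v liftK.
  transitivity (lcon phi (wedge e (mu Ws)) U).
    by rewrite !ffunE; apply: eq_bigr => i _; rewrite hw.
  have h1 : \sum_i phi i * e i = phi j0.
    rewrite (bigD1 j0) //= [X in _ + X]big1 => [|j hj]; last by rewrite /e (negbTE hj) mulr0.
    by rewrite /e eqxx mulr1 addr0.
  rewrite lcon_wedge h1 [X in _ - X]ffunE [X in _ - X]big1 ?subr0 // => i _.
  by rewrite (lcon_muf0 kerW) mulr0.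
have := @cyc_main k m d B phi (mu Vs) (muf v) hcyc (lcon_muf0 kerV).
have -> : pairing B (mu Vs) (lcon phi (muf v)) = phi j0 * pairing B (mu Vs) (mu Ws).
  rewrite /pairing mulr_sumr; apply: eq_bigr => S _; rewrite mulr_sumr; apply: eq_bigr => T _.
  by rewrite hb; ring.
by move/eqP; rewrite mulf_eq0 (negbTE hphi0) (negbTE hP).
Qed.
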